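(* For every graph $G$, $\operatorname{box}(G)\le MFVC(G)+3$.
   Context: A feedback vertex cover of $G=(V,E)$ is a set $S\subseteq V$ such that the subgraph induced on $V\setminus S$ is a forest; $MFVC(G)$ is the minimum cardinality of a feedback vertex cover. The boxicity $\operatorname{box}(G)$ is the minimum $b$ such that $G$ is the intersection graph of axis-parallel boxes in $\mathbb{R}^b$ (products of $b$ closed intervals), one box per vertex. *)

(* Defs.v *)
From Stdlib Require Import Reals ClassicalEpsilon.
From mathcomp Require Import all_boot.

Set Implicit Arguments.
Unset Strict Implicit.
Unset Printing Implicit Defensive.

(* A (finite, simple) graph: vertex type T : finType, adjacency e : rel T,
   assumed symmetric and irreflexive in the theorem. *)

Definition has_cycle_in (T : finType) (e : rel T) (A : {set T}) : Prop :=
  exists p : seq T, [/\ (3 <= size p)%N, uniq p, all (fun x => x \in A) p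
                     & cycle e p].

Definition induced_forest (T : finType) (e : rel T) (A : {set T}) : Prop :=
  ~ has_cycle_in e A.

Definition is_fvc (T : finType) (e : rel T) (S : {set T}) : Prop :=
  induced_forest e (~: S).

Definition asb (P : Prop) : bool :=
  if excluded_middle_informative P then true else false.

(* MFVC(G): minimum cardinality of a feedback vertex cover
   (the full vertex set is always one, so #|T| is a valid default). *)
Definition mfvc (T : finType) (e : rel T) : nat :=
  \big[minn/#|T|]_(S : {set T} | asb (is_fvc e S)) #|S|.

Definition in_box (b : nat) (lo hi : 'I_b -> R) (x : 'I_b -> R) : Prop :=
  forall i, Rle (lo i) (x i) /\ Rle (x i) (hi i).

Definition box_rep (T : finType) (e : rel T) (b : nat) : Prop :=
  exists lo hi : T -> 'I_b -> R,
    (forall v i, Rle (lo v i) (hi v i)) /\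
    (forall u v, u != v ->
       (e u v <-> exists x : 'I_b -> R, in_box (lo u) (hi u) x /\ in_box (lo v) (hi v) x)).

Definition boxicity_le (T : finType) (e : rel T) (k : nat) : Prop :=
  exists b : nat, (b <= k)%N /\ box_rep e b.

(* Main.v *)
Require Import Defs.
From Stdlib Require Import Reals Lra Classical ClassicalEpsilon.
From mathcomp Require Import all_boot.
Set Implicit Arguments. Unset Strict Implicit.

Lemma forest_sub (T : finType) (e : rel T) (A B : {set T}) :
  A \subset B -> induced_forest e B -> induced_forest e A.
Proof.
move=> sAB hB [p [h1 h2 h3 h4]]; apply: hB; exists p; split=> //.
by apply/allP=> x /(allP h3) /(subsetP sAB).
Qed.

Definition leafv (T : finType) (e : rel T) (A : {set T}) (v : T) :=
  forall x y, x \in A -> y \in A -> e v x -> e v y -> x = y.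

Lemma leaf_exists (T : finType) (e : rel T) (e_sym : symmetric e)
  (e_irr : irreflexive e) (A : {set T}) (x0 : T) :
  x0 \in A -> induced_forest e A -> exists2 v, v \in A & leafv e A v.
Proof.
move=> x0A hF.
apply: NNPP => nol.
have nl : forall v, v \in A -> exists x y, [/\ x \in A, y \in A, e v x, e v y & x <> y].
  move=> v vA; apply: NNPP => H; apply: nol; exists v => // x y xA yA evx evy.
  apply: NNPP => nxy; apply: H; by exists x, y.
have key : forall k, exists x p, [/\ size p = k, uniq (x :: p), all (fun z => z \in A) (x :: p) & path e x p].
  elim=> [|k [x [p [sz un al pa]]]]; first by exists x0, [::]; rewrite /= x0A.
  have xA : x \in A by move: al => /= /andP[].
  have [y1 [y2 [y1A y2A e1 e2 n12]]] := nl x xA.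
  case: (boolP (y1 \in x :: p)) => m1; last first.
    exists y1, (x :: p); split=> //=; first by rewrite sz.
    - by rewrite m1.
    - by rewrite y1A.
    - by rewrite e_sym e1.
  case: (boolP (y2 \in x :: p)) => m2; last first.
    exists y2, (x :: p); split=> //=; first by rewrite sz.
    - by rewrite m2.
    - by rewrite y2A.
    - by rewrite e_sym e2.
  have [y [yp eyx hy]] : exists y, [/\ y \in p, e x y & forall q, p = y :: q -> False].
    have ny1 : y1 != x by apply/eqP=> h; move: e1; rewrite h e_irr.
    have ny2 : y2 != x by apply/eqP=> h; move: e2; rewrite h e_irr.
    move: m1 m2; rewrite !inE (negbTE ny1) (negbTE ny2) /= => m1 m2.
    case: p {sz un al pa} m1 m2 => [//|z q] m1 m2.
    case: (eqVneq y1 z) => [hz|hz].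
      exists y2; split=> // q' [h _]; apply: n12; by rewrite hz h.
    exists y1; split=> // q' [h _]; by move: hz; rewrite h eqxx.
  case/splitPr: yp un al pa hy => p1 p2 un al pa hy.
  exfalso; apply: hF; exists (x :: p1 ++ [:: y]); split.
  - case: p1 un al pa hy => [|z p1] _ _ _ hy; first by exfalso; apply: (hy p2).
    by rewrite /= size_cat /= addnS.
  - have eq : x :: p1 ++ y :: p2 = (x :: p1 ++ [:: y]) ++ p2 by rewrite /= -catA.
    by move: un; rewrite eq cat_uniq => /andP[].
  - have eq : x :: p1 ++ y :: p2 = (x :: p1 ++ [:: y]) ++ p2 by rewrite /= -catA.
    by move: al; rewrite eq all_cat => /andP[].
  - rewrite /= rcons_cat /= cat_path /=.
    move: pa; rewrite cat_path /= => /and3P[-> -> _] /=.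
    by rewrite e_sym eyx.
have [x [p [sz un _ _]]] := key #|T|.
have := max_card (mem (x :: p)).
by move/card_uniqP: un => ->; rewrite /= sz ltnn.
Qed.
Local Open Scope R_scope.

Definition finv (T : finType) (e : rel T) (A : {set T}) (a b c d : T -> R) (L B D : R) : Prop :=
 [/\ (L <= B) /\ (0 <= D),
  (forall u, u \in A -> (L <= a u) /\ (a u <= c u) /\ (c u < b u) /\ (b u < B)
                        /\ (0 <= d u) /\ (d u <= D)),
  (forall u w, u \in A -> w \in A -> u != w -> (c u <= b w) -> (c w <= b u) -> False),
  (forall u w, u \in A -> w \in A -> u != w -> (a w <= b u) -> (c u <= b w) -> (d w < d u))
 & (forall u w, u \in A -> w \in A -> u != w ->
     (e u w <-> ((a u <= b w) /\ (a w <= b u) /\ (d u <= d w + 1) /\ (d w <= d u + 1))))].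

Lemma finv_root (T : finType) (e : rel T) (e_sym : symmetric e) (A : {set T}) a b c d L B D v :
  finv e A a b c d L B D -> v \notin A -> (forall w, w \in A -> ~~ e v w) ->
  finv e (v |: A) (fun u => if u == v then B else a u) (fun u => if u == v then (B+1) else b u)
    (fun u => if u == v then B else c u) (fun u => if u == v then 0 else d u) L (B+2) D.
Proof.
move=> [[LB D0] I1 I2 I3 I4] vA nb.
have ne : forall w, w \in A -> (w == v) = false.
  by move=> w wA; apply/eqP=> h; move: vA; rewrite -h wA.
have I1' := I1.
split.
- split; lra.
- move=> u; rewrite in_setU1; case: eqP => [->|_] /= uA; first lra.
  have := I1 u uA; lra.
- move=> u w; rewrite !in_setU1.
  case: (eqVneq u v) => [->|nuv]; case: (eqVneq w v) => [->|nwv]; rewrite ?eqxx ?(negbTE nuv) ?(negbTE nwv) //= => uA wA uw.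
  + have := I1 w wA; lra.
  + have := I1 u uA; lra.
  + exact: I2 uA wA uw.
- move=> u w; rewrite !in_setU1.
  case: (eqVneq u v) => [->|nuv]; case: (eqVneq w v) => [->|nwv]; rewrite ?eqxx ?(negbTE nuv) ?(negbTE nwv) //= => uA wA uw.
  + have := I1 w wA; lra.
  + have := I1 u uA; lra.
  + exact: I3 uA wA uw.
- move=> u w; rewrite !in_setU1.
  case: (eqVneq u v) => [->|nuv]; case: (eqVneq w v) => [->|nwv]; rewrite ?eqxx ?(negbTE nuv) ?(negbTE nwv) //= => uA wA uw.
  + rewrite (negbTE (nb w wA)); have := I1 w wA; split=> //; lra.
  + rewrite e_sym (negbTE (nb u uA)); have := I1 u uA; split=> //; lra.
  + exact: I4 uA wA uw.
Qed.

Lemma finv_leaf (T : finType) (e : rel T) (e_sym : symmetric e) (A : {set T}) a b c d L B D v p :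
  finv e A a b c d L B D -> v \notin A -> p \in A -> e v p -> (forall w, w \in A -> e v w -> w = p) ->
  let dl := ((b p - c p) / 4) in
  finv e (v |: A) (fun u => if u == v then (c p + dl) else a u)
    (fun u => if u == v then (c p + 2 * dl) else b u)
    (fun u => if u == v then (c p + dl) else if u == p then (c p + 3 * dl) else c u)
    (fun u => if u == v then (d p + 1) else d u) L B (D + 1).
Proof.
move=> [[LB D0] I1 I2 I3 I4] vA pA evp nb dl.
have ne : forall w, w \in A -> (w == v) = false.
  by move=> w wA; apply/eqP=> h; move: vA; rewrite -h wA.
have Ip := I1 p pA.
have hdl : (0 < dl) by rewrite /dl; lra.
have hdl2 : (c p + 4 * dl = b p) by rewrite /dl; lra.
split.
- split; lra.
- move=> u; rewrite in_setU1; case: eqP => [->|nuv] /= uA; first lra.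
  case: eqP => [->|_]; first lra.
  have := I1 u uA; lra.
- move=> u w; rewrite !in_setU1.
  case: (eqVneq u v) => [->|nuv]; case: (eqVneq w v) => [->|nwv]; rewrite ?eqxx ?(negbTE nuv) ?(negbTE nwv) //= => uA wA uw.
  + case: (eqVneq w p) => [->|nwp]; first lra.
    move=> h1 h2; apply: (I2 p w) => //; [by rewrite eq_sym | lra | lra].
  + case: (eqVneq u p) => [->|nup]; first lra.
    move=> h1 h2; apply: (I2 u p) => //; lra.
  + move=> h1 h2; apply: (I2 u w uA wA) => //.
    - move: h1; case: eqP => [->|_]; lra.
    - move: h2; case: eqP => [->|_]; lra.
- move=> u w; rewrite !in_setU1.
  case: (eqVneq u v) => [->|nuv]; case: (eqVneq w v) => [->|nwv]; rewrite ?eqxx ?(negbTE nuv) ?(negbTE nwv) //= => uA wA uw.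
  + case: (eqVneq w p) => [->|nwp]; first lra.
    move=> h1 h2; have := I3 p w pA wA; rewrite eq_sym nwp => /(_ isT); lra.
  + case: (eqVneq u p) => [->|nup]; first lra.
    move=> h1 h2; exfalso; apply: (I2 u p) => //; lra.
  + move=> h1 h2; apply: (I3 u w uA wA) => //.
    move: h2; case: eqP => [->|_]; lra.
- have key : forall w, w \in A -> (e v w <-> ((c p + dl <= b w) /\ (a w <= c p + 2 * dl)
        /\ (d p + 1 <= d w + 1) /\ (d w <= d p + 1 + 1))).
    move=> w wA; case: (eqVneq w p) => [->|nwp].
      by rewrite evp; split=> // _; lra.
    have -> : e v w = false by apply/negP=> /(nb w wA) /eqP; rewrite (negbTE nwp).
    split=> // -[h1 [h2 [h3 h4]]].
    have := I3 p w pA wA; rewrite eq_sym nwp => /(_ isT); lra.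
  move=> u w; rewrite !in_setU1.
  case: (eqVneq u v) => [->|nuv]; case: (eqVneq w v) => [->|nwv]; rewrite ?eqxx ?(negbTE nuv) ?(negbTE nwv) //= => uA wA uw.
  + exact: key.
  + rewrite e_sym key //; lra.
  + exact: I4 uA wA uw.
Qed.

Lemma forest_rep (T : finType) (e : rel T) (e_sym : symmetric e) (e_irr : irreflexive e)
  (A : {set T}) : induced_forest e A ->
  exists a b c d L B D, finv e A a b c d L B D.
Proof.
move Hn : #|A| => n; elim: n A Hn => [|n IH] A Hn hF.
  have A0 : A = set0 by apply/eqP; rewrite -cards_eq0 Hn.
  exists (fun _ => 0), (fun _ => 0), (fun _ => 0), (fun _ => 0), 0, 0, 0.
  rewrite A0; split; try (by move=> ?; rewrite inE); try (by move=> ? ?; rewrite inE).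
  split; lra.
have [x0 x0A] : exists x, x \in A.
  by apply/set0Pn; rewrite -card_gt0 Hn.
have [v vA lv] := leaf_exists e_sym e_irr x0A hF.
set A' := A :\ v.
have HA : A = v |: A' by rewrite /A' setD1K.
have vA' : v \notin A' by rewrite /A' setD11.
have Hn' : #|A'| = n by move: Hn; rewrite (cardsD1 v A) vA add1n => -[].
have hF' : induced_forest e A' by apply: (forest_sub _ hF); rewrite /A' subD1set.
have [a [b [c [d [L [B [D Hinv]]]]]]] := IH A' Hn' hF'.
have A'A : forall w, w \in A' -> w \in A by move=> w; rewrite /A' in_setD1 => /andP[].
rewrite HA.
case: (boolP [exists p in A', e v p]).
- move=> /exists_inP [p pA' evp].
  do 7 eexists; apply: (finv_leaf e_sym Hinv vA' pA' evp).
  move=> w wA' evw; exact: (lv w p (A'A w wA') (A'A p pA') evw evp).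
- move=> /exists_inPn nb.
  do 7 eexists; exact: (finv_root e_sym Hinv vA' nb).
Qed.
Lemma meetP (n : nat) (lo1 hi1 lo2 hi2 : 'I_n -> R) :
  (forall i, lo1 i <= hi1 i) -> (forall i, lo2 i <= hi2 i) ->
  ((exists x, in_box lo1 hi1 x /\ in_box lo2 hi2 x) <->
   (forall i, lo1 i <= hi2 i /\ lo2 i <= hi1 i)).
Proof.
move=> h1 h2; split.
- move=> [x [b1 b2]] i; have := b1 i; have := b2 i; lra.
- move=> H; exists (fun i => Rmax (lo1 i) (lo2 i)); split=> i; have := H i;
  have := h1 i; have := h2 i; rewrite /Rmax; case: Rle_dec; lra.
Qed.

Lemma asbP (P : Prop) : asb P -> P.
Proof. by rewrite /asb; case: excluded_middle_informative. Qed.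

Lemma mfvc_ex (T : finType) (e : rel T) : exists S, is_fvc e S /\ (#|S| <= mfvc e)%N.
Proof.
rewrite /mfvc; apply: (big_ind (fun m => exists S, is_fvc e S /\ (#|S| <= m)%N)).
- exists setT; split; last by rewrite cardsT.
  move=> [p [h1 _ h3 _]]; case: p h1 h3 => [//|x p] _ /=; by rewrite !inE.
- move=> x y [S1 [f1 l1]] [S2 [f2 l2]]; rewrite /minn; case: ltnP => _.
  + by exists S1. + by exists S2.
- move=> S /asbP hS; by exists S.
Qed.

Theorem theorem18 (T : finType) (e : rel T) (e_sym : symmetric e) (e_irr : irreflexive e) :
  boxicity_le e (mfvc e + 3)%nat.
Proof.
have [S [fS cS]] := mfvc_ex e.
have [a [b [c [d [L [B [D [[LB D0] I1 I2 I3 I4]]]]]]]] := forest_rep e_sym e_irr fS.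
set sS := enum S.
set n := (#|S| + 2)%N.
exists n; split; first exact: leq_add cS _.
set LB0 := Rmin L 0; set UB0 := Rmax B (D + 1).
have hLB1 : LB0 <= L by apply: Rmin_l.
have hLB2 : LB0 <= 0 by apply: Rmin_r.
have hUB1 : B <= UB0 by apply: Rmax_l.
have hUB2 : D + 1 <= UB0 by apply: Rmax_r.
pose lo := fun v (i : 'I_n) => if (i < 2)%N then
   (if v \in S then LB0 else if (nat_of_ord i == 0%N) then a v else d v)
   else (if v == nth v sS (i - 2) then 0 else if e v (nth v sS (i - 2)) then 0 else 1).
pose hi := fun v (i : 'I_n) => if (i < 2)%N then
   (if v \in S then UB0 else if (nat_of_ord i == 0%N) then b v else d v + 1)
   else (if v == nth v sS (i - 2) then 0 else if e v (nth v sS (i - 2)) then 1 else 2).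
have notS : forall v, v \notin S -> v \in ~: S by move=> v; rewrite inE.
have nthS : forall (i : 'I_n) w, ~~ (i < 2)%N ->
    nth w sS (i - 2) \in S /\ forall w', nth w' sS (i - 2) = nth w sS (i - 2).
  move=> i w; rewrite -leqNgt => i2.
  have hs : (i - 2 < size sS)%N.
    rewrite /sS -cardE; have := ltn_ord i; rewrite /n.
    by move: i2; case: (nat_of_ord i) => [|[|k]] //= _; rewrite subn2 /= addn2 !ltnS.
  split; first by rewrite -mem_enum mem_nth.
  by move=> w'; apply: set_nth_default.
have lohi : forall v i, lo v i <= hi v i.
  move=> v i; rewrite /lo /hi; case: ifP => _.
    case: ifP => vS; first lra.
    have := I1 v (notS v (negbT vS)); case: ifP => _; lra.
  case: ifP => _; first lra; case: ifP => _; lra.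
exists lo, hi; split=> // u v uv; rewrite meetP //.
have h0 : (0 < n)%N by rewrite /n addn2.
have h1 : (1 < n)%N by rewrite /n addn2.
have caseB : forall u v, u != v -> u \in S ->
    (e u v <-> forall i, lo u i <= hi v i /\ lo v i <= hi u i).
  move=> {}u {}v {}uv uS; split.
  - move=> euv i; rewrite /lo /hi; case: ifP => i2.
      rewrite uS; case: ifP => vS; first lra.
      have := I1 v (notS v (negbT vS)); case: ifP => _; lra.
    have [sS' nd] := nthS i u (negbT i2).
    rewrite (nd v); set s := nth u sS (i - 2).
    case: (eqVneq u s) => [us|us]; case: (eqVneq v s) => [vs|vs].
    + by move: uv; rewrite us vs eqxx.
    + by rewrite -us e_sym euv; lra.
    + by rewrite -vs euv; case: (e u v); lra.
    + by case: (e u s); case: (e v s); lra.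
  - move=> H.
    have uin : u \in sS by rewrite mem_enum.
    have hi' : (2 + index u sS < n)%N.
      by rewrite /n addnC ltn_add2r /sS cardE index_mem.
    have := H (Ordinal hi'); rewrite /lo /hi /=.
    have -> : (2 + index u sS - 2 = index u sS)%N by rewrite addKn.
    rewrite !nth_index // eqxx.
    have -> : (v == u) = false by rewrite eq_sym (negbTE uv).
    by rewrite e_sym; case: (e u v) => //; lra.
case: (boolP (u \in S)) => uS; first exact: caseB.
case: (boolP (v \in S)) => vS.
  rewrite e_sym caseB //; last by rewrite eq_sym.
  by split=> H i; have := H i; tauto.
rewrite I4 ?notS //; split.
- move=> [f1 [f2 [f3 f4]]] i; rewrite /lo /hi; case: ifP => i2.
    by rewrite (negbTE uS) (negbTE vS); case: ifP => _; lra.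
  have [sS' nd] := nthS i u (negbT i2).
  rewrite (nd v); set s := nth u sS (i - 2).
  have -> : (u == s) = false by apply/eqP=> h; move: uS; rewrite h sS'.
  have -> : (v == s) = false by apply/eqP=> h; move: vS; rewrite h sS'.
  by case: (e u s); case: (e v s); lra.
- move=> H.
  have := H (Ordinal h0); have := H (Ordinal h1).
  rewrite /lo /hi /= (negbTE uS) (negbTE vS) /=; lra.
Qed.
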